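(* Let $A\overset{i}{\to}U\overset{j}{\to}S$ be an extension of a semilattice of groups $A$ by an inverse semigroup $S$, $\rho$ a transversal of $j$, and $\Lambda=(\alpha,\lambda,f)$ the twisted $S$-module structure on $A$ induced by $\rho$. Then $\Lambda$ is a Sieben twisted $S$-module structure, i.e. $f(s,e)=\alpha(ses^{-1})$ and $f(e,s)=\alpha(ess^{-1})$ for all $s\in S$ and $e\in E(S)$, if and only if $\rho$ is order-preserving ($s\le t\Rightarrow\rho(s)\le\rho(t)$ in the natural partial orders).
   Context: A semilattice of groups is an inverse semigroup $A$ whose idempotents are central; $A_e=\{a: aa^{-1}=a^{-1}a=e\}$. An extension of $A$ by $S$ is an inverse semigroup $U$ with a monomorphism $i:A\to U$ and an idempotent-separating epimorphism $j:U\to S$ with $i(A)=j^{-1}(E(S))$. A transversal of $j$ is $\rho:S\to U$ with $j\circ\rho=\mathrm{id}_S$ and $\rho(E(S))\subseteq E(U)$. The induced structure: $\alpha=i^{-1}\circ\rho|_{E(S)}$, $\lambda_s(a)=i^{-1}(\rho(s)i(a)\rho(s)^{-1})$, and $f(s,t)$ the unique element of $A_{\alpha(stt^{-1}s^{-1})}$ with $\rho(s)\rho(t)=i(f(s,t))\rho(st)$. *)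

(* Defs.v *)
(* This is the standard equivalent definition of inverse semigroups. *)
Record InvSemigroup := {
  carrier :> Type;
  smul : carrier -> carrier -> carrier;
  sinv : carrier -> carrier;
  smulA : forall x y z, smul x (smul y z) = smul (smul x y) z;
  smul_inv_mul : forall x, smul (smul x (sinv x)) x = x;
  sinv_mul_inv : forall x, smul (smul (sinv x) x) (sinv x) = sinv x;
  sidem_comm : forall e f, smul e e = e -> smul f f = f -> smul e f = smul f e
}.

Arguments smul {i} _ _.
Arguments sinv {i} _.

Definition idempotent {S : InvSemigroup} (e : S) : Prop := smul e e = e.

Definition nat_le {S : InvSemigroup} (s t : S) : Prop :=
  exists e : S, idempotent e /\ s = smul e t.

Definition semilattice_of_groups (A : InvSemigroup) : Prop :=
  forall e a : A, idempotent e -> smul e a = smul a e.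

Definition in_component {A : InvSemigroup} (e a : A) : Prop :=
  smul a (sinv a) = e /\ smul (sinv a) a = e.

Definition is_hom {S T : InvSemigroup} (h : S -> T) : Prop :=
  forall x y : S, h (smul x y) = smul (h x) (h y).

Definition is_extension (A U S : InvSemigroup) (i : A -> U) (j : U -> S) : Prop :=
  semilattice_of_groups A /\
  (is_hom i /\ (forall a b, i a = i b -> a = b)) /\
  (is_hom j /\ (forall s : S, exists u : U, j u = s)) /\
  (forall e f : U, idempotent e -> idempotent f -> j e = j f -> e = f) /\
  (forall u : U, (exists a : A, i a = u) <-> idempotent (j u)).

Definition is_transversal {U S : InvSemigroup} (j : U -> S) (rho : S -> U) : Prop :=
  (forall s, j (rho s) = s) /\ (forall e : S, idempotent e -> idempotent (rho e)).

(* alpha = i^{-1} o rho on E(S) (values outside E(S) are irrelevant). *)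
Definition induced_alpha {A U S : InvSemigroup} (i : A -> U) (rho : S -> U)
  (alpha : S -> A) : Prop :=
  forall e : S, idempotent e -> i (alpha e) = rho e.

Definition induced_f {A U S : InvSemigroup} (i : A -> U) (rho : S -> U)
  (alpha : S -> A) (f : S -> S -> A) : Prop :=
  forall s t : S,
    in_component (alpha (smul (smul s t) (sinv (smul s t)))) (f s t) /\
    smul (rho s) (rho t) = smul (i (f s t)) (rho (smul s t)).

Definition sieben {A S : InvSemigroup} (alpha : S -> A) (f : S -> S -> A) : Prop :=
  forall s e : S, idempotent e ->
    f s e = alpha (smul (smul s e) (sinv s)) /\
    f e s = alpha (smul (smul e s) (sinv s)).

Definition order_preserving {S U : InvSemigroup} (rho : S -> U) : Prop :=
  forall s t : S, nat_le s t -> nat_le (rho s) (rho t).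

(* Main.v *)
Require Import Defs.
From Stdlib Require Import Setoid.

Arguments smulA {_}.
Arguments smul_inv_mul {_}.
Arguments sinv_mul_inv {_}.
Arguments sidem_comm {_}.
Section IS.
Variable S : InvSemigroup.
Implicit Types x y e k h : S.
Notation "x ** y" := (smul x y) (at level 40, left associativity).
Notation "x ^' " := (sinv x) (at level 5).

Lemma comm e k : idempotent e -> idempotent k -> e ** k = k ** e.
Proof. apply sidem_comm. Qed.

Lemma idem_xxi x : idempotent (x ** x^').
Proof. unfold idempotent. rewrite smulA, smul_inv_mul. reflexivity. Qed.
Lemma idem_xix x : idempotent (x^' ** x).
Proof. unfold idempotent. rewrite smulA. rewrite sinv_mul_inv. reflexivity. Qed.
Lemma xix_r x : x ** (x^' ** x) = x.
Proof. rewrite smulA; apply smul_inv_mul. Qed.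

Lemma inv_unique x y : x ** y ** x = x -> y ** x ** y = y -> y = x^'.
Proof.
intros H1 H2.
assert (Ixy : idempotent (x ** y)).
{ unfold idempotent. rewrite smulA, H1. reflexivity. }
assert (Iyx : idempotent (y ** x)).
{ unfold idempotent. rewrite smulA, H2. reflexivity. }
assert (E1 : x ** y = x ** x^').
{ rewrite <- (smul_inv_mul x) at 1. rewrite <- smulA.
  rewrite (comm _ _ (idem_xxi x) Ixy).
  rewrite smulA, H1. reflexivity. }
assert (E2 : y ** x = x^' ** x).
{ rewrite <- (xix_r x) at 1. rewrite smulA.
  rewrite (comm _ _ Iyx (idem_xix x)).
  rewrite <- smulA, (smulA x y x), H1. reflexivity. }
rewrite <- H2, E2, <- smulA, E1, smulA, sinv_mul_inv. reflexivity.
Qed.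

Lemma ixi_r x : x^' ** (x ** x^') = x^'.
Proof. rewrite smulA; apply sinv_mul_inv. Qed.

Lemma sinv_idem e : idempotent e -> e^' = e.
Proof. intro H. symmetry. apply inv_unique; unfold idempotent in H; rewrite !H; auto. Qed.

Lemma idem_mul e k : idempotent e -> idempotent k -> idempotent (e ** k).
Proof. intros He Hk. unfold idempotent in *.
rewrite <- smulA, (smulA k e k), <- (comm _ _ He Hk), <- smulA, Hk, smulA, He. auto. Qed.

Lemma sinv_mul x y : (x ** y)^' = y^' ** x^'.
Proof. symmetry. apply inv_unique.
- rewrite <- !smulA. rewrite (smulA y y^' (x^' ** (x ** y))).
  rewrite (smulA x^' x y).
  rewrite (smulA (y ** y^')), (comm _ _ (idem_xxi y) (idem_xix x)).
  rewrite <- smulA, <- (smulA y), xix_r, !smulA, smul_inv_mul. reflexivity.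
- rewrite <- !smulA. rewrite (smulA x^' x), (smulA y y^' x^'), (smulA (x^' ** x)).
  rewrite (comm _ _ (idem_xix x) (idem_xxi y)), <- (smulA (y ** y^')), sinv_mul_inv.
  rewrite smulA, (smulA y^' y), sinv_mul_inv. reflexivity.
Qed.
Lemma le_left x y h : idempotent h -> x = h ** y -> x = x ** x^' ** y.
Proof. intros Hh ->. rewrite sinv_mul, (sinv_idem h Hh). rewrite <- !smulA.
rewrite (smulA y y^' (h ** y)), (smulA (y ** y^') h y), (comm _ _ (idem_xxi y) Hh).
rewrite <- (smulA h), smul_inv_mul, (smulA h h y). unfold idempotent in Hh. rewrite Hh. reflexivity. Qed.

Lemma le_right x y k : idempotent k -> x = y ** k -> x = x ** x^' ** y.
Proof. intros Hk ->. rewrite sinv_mul, (sinv_idem k Hk). rewrite <- !smulA.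
rewrite (smulA k k), Hk, (comm _ _ Hk (idem_xix y)), smulA, xix_r. reflexivity. Qed.

Lemma et_eq e t : idempotent e -> e ** t ** (e ** t)^' = e ** t ** t^'.
Proof. intro He. rewrite sinv_mul, (sinv_idem e He), <- !smulA, (smulA t t^' e),
  (comm _ _ (idem_xxi t) He), (smulA e e), He. reflexivity. Qed.

Lemma se_eq s e : idempotent e -> s ** e ** (s ** e)^' = s ** e ** s^'.
Proof. intro He. rewrite sinv_mul, (sinv_idem e He), <- !smulA, (smulA e e), He. reflexivity. Qed.
End IS.

Lemma hom_inv (S T : InvSemigroup) (h : S -> T) x : is_hom h -> h (sinv x) = sinv (h x).
Proof. intro Hh. apply inv_unique; rewrite <- !Hh.
- rewrite smul_inv_mul. reflexivity.
- rewrite sinv_mul_inv. reflexivity. Qed.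

Theorem proposition3p23 (A U S : InvSemigroup) (i : A -> U) (j : U -> S)
  (rho : S -> U) (alpha : S -> A) (f : S -> S -> A) :
  is_extension A U S i j ->
  is_transversal j rho ->
  induced_alpha i rho alpha ->
  induced_f i rho alpha f ->
  (sieben alpha f <-> order_preserving rho).
Proof.
intros [HA [[Hi Hiinj] [[Hj Hjsurj] [Hjinj Hiim]]]] [Hjr Hridem] Hal Hf.
assert (jidem : forall u : U, j (smul u (sinv u)) = smul (j u) (sinv (j u))).
{ intro u. rewrite Hj, (hom_inv _ _ j u Hj). reflexivity. }
assert (rho_cc : forall c, rho (smul c (sinv c)) = smul (rho c) (sinv (rho c))).
{ intro c. apply Hjinj. apply Hridem, idem_xxi. apply idem_xxi.
  rewrite jidem, !Hjr. reflexivity. }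
assert (Key : forall u v w : U, u = smul (smul u (sinv u)) w -> v = smul (smul v (sinv v)) w
   -> j u = j v -> u = v).
{ intros u v w Hu Hv Huv. rewrite Hu, Hv. f_equal. apply Hjinj; try apply idem_xxi.
  rewrite !jidem, Huv. reflexivity. }
assert (F : forall a b, smul (rho a) (rho b) = rho (smul a b) ->
   f a b = alpha (smul (smul a b) (sinv (smul a b)))).
{ intros a b Hab. destruct (Hf a b) as [[Hc1 Hc2] Heq].
  rewrite Hab in Heq. set (c := smul a b) in *. apply Hiinj.
  rewrite (Hal _ (idem_xxi _ c)), rho_cc.
  rewrite <- (xix_r _ (f a b)), Hi, Hc2, (Hal _ (idem_xxi _ c)), rho_cc, smulA, <- Heq.
  reflexivity. }
split.
- intros Hs s t [e [He ->]]. exists (rho e). split; [apply Hridem; exact He|].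
  destruct (Hf e t) as [_ Heq]. destruct (Hs t e He) as [_ H2].
  assert (Ie : idempotent (smul (smul e t) (sinv t))).
  { rewrite <- smulA. apply idem_mul; [exact He | apply idem_xxi]. }
  rewrite Heq, H2, (Hal _ Ie), <- (et_eq _ e t He), rho_cc.
  rewrite smul_inv_mul. reflexivity.
- intros Hop s e He. split.
  + rewrite <- (se_eq _ s e He). apply F. apply Key with (w := rho s).
    * apply le_right with (rho e). apply Hridem, He. reflexivity.
    * assert (Hle : nat_le (smul s e) s).
      { exists (smul (smul s e) (sinv (smul s e))). split. apply idem_xxi.
        apply le_right with e; [exact He| reflexivity]. }
      destruct (Hop _ _ Hle) as [h [Hh Hq]]. apply le_left with h; assumption.
    * rewrite Hj, !Hjr. reflexivity.
  + rewrite <- (et_eq _ e s He). apply F. apply Key with (w := rho s).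
    * apply le_left with (rho e). apply Hridem, He. reflexivity.
    * assert (Hle : nat_le (smul e s) s) by (exists e; split; [exact He | reflexivity]).
      destruct (Hop _ _ Hle) as [h [Hh Hq]]. apply le_left with h; assumption.
    * rewrite Hj, !Hjr. reflexivity.
Qed.
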